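(* Let $H_1$ and $H_2$ be simple, undirected, connected graphs on the same vertex set $V$, each of girth at least $6$, such that $H_1^2 = H_2^2$ (equal as graphs on $V$). Then $H_1$ and $H_2$ are isomorphic.
   Context: For a simple, undirected, connected graph $H$, its square $H^2$ is the graph on the same vertex set in which two distinct vertices are adjacent if and only if their distance in $H$ is at most $2$. The girth of a graph is the length of its shortest cycle ($\infty$ for a tree). *)

(* Defs.v *)
From mathcomp Require Import all_boot.
Set Implicit Arguments. Unset Strict Implicit. Unset Printing Implicit Defensive.

Definition simple_graph (V : finType) (e : rel V) : Prop :=
  symmetric e /\ irreflexive e.

Definition connected_graph (V : finType) (e : rel V) : Prop :=
  forall x y : V, connect e x y.

Definition has_cycle_of_length (V : finType) (e : rel V) (k : nat) : Prop :=
  exists s : seq V, [/\ size s = k, 3 <= k, uniq s & cycle e s].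

(* girth >= g : no cycle of length < g (a tree has girth infinity). *)
Definition girth_at_least (V : finType) (e : rel V) (g : nat) : Prop :=
  forall k, k < g -> ~ has_cycle_of_length e k.

Definition sq_graph (V : finType) (e : rel V) : rel V :=
  fun x y => (x != y) && (e x y || [exists z, e x z && e z y]).

Definition graph_iso (V W : finType) (e1 : rel V) (e2 : rel W) : Prop :=
  exists f : V -> W, bijective f /\ forall x y, e1 x y = e2 (f x) (f y).

(* Main.v *)
Require Import Defs.
From mathcomp Require Import all_boot.

Section OneGraph.
Variables (V : finType) (e : rel V).
Hypothesis (Hs : simple_graph e) (Hg : girth_at_least e 6).

Lemma esym' {x y} : e x y -> e y x.
Proof. by case: Hs => S _; rewrite S. Qed.

Lemma eneq {x y} : e x y -> x != y.
Proof. by case: Hs => _ I Exy; apply/eqP => E; rewrite E I in Exy. Qed.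

Lemma no3 {a b c} : e a b -> e b c -> e c a -> False.
Proof.
move=> ab bc ca; apply: (Hg 3) => //.
exists [:: a; b; c]; split => //=.
  rewrite !inE negb_or (eneq ab) (eneq bc) /=.
  by rewrite eq_sym (eneq ca).
by rewrite ab bc ca.
Qed.

Lemma no4 {a b c d} : e a b -> e b c -> e c d -> e d a -> a != c -> b != d -> False.
Proof.
move=> ab bc cd da ac bd; apply: (Hg 4) => //.
exists [:: a; b; c; d]; split => //=.
  rewrite !inE !negb_or (eneq ab) ac (eneq bc) bd (eneq cd) /=.
  by rewrite eq_sym (eneq da).
by rewrite ab bc cd da.
Qed.

Lemma no5 {a b c d f} : e a b -> e b c -> e c d -> e d f -> e f a ->
  a != c -> a != d -> b != d -> b != f -> c != f -> False.
Proof.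
move=> ab bc cd df fa ac ad bd bf cf; apply: (Hg 5) => //.
exists [:: a; b; c; d; f]; split => //=.
  rewrite !inE !negb_or (eneq ab) ac ad (eneq bc) bd bf (eneq cd) cf (eneq df) /=.
  by rewrite eq_sym (eneq fa).
by rewrite ab bc cd df fa.
Qed.

Lemma F1 {x y z} : e x y -> sq_graph e x z -> sq_graph e y z -> e x z \/ e y z.
Proof.
move=> exy /andP [nxz /orP [exz | /existsP [a /andP [exa eaz]]]]; first by left.
move=> /andP [nyz /orP [eyz | /existsP [b /andP [eyb ebz]]]]; first by right.
case: (eqVneq a y) => [Eay | nay]; first by subst; right.
case: (eqVneq b x) => [Ebx | nbx]; first by subst; left.
case: (eqVneq a b) => [Eab | nab].
  subst; exfalso; exact: (no3 exa (esym' eyb) (esym' exy)).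
exfalso; apply: (no5 exa eaz (esym' ebz) (esym' eyb) (esym' exy)) => //.
- by rewrite eq_sym.
- by rewrite eq_sym.
Qed.

Lemma cross {x y a c} : e x y -> e x a -> a != y -> e y c -> c != x -> ~~ sq_graph e a c.
Proof.
move=> exy exa nay eyc ncx; apply/negP => /andP [nac /orP [eac | /existsP [m /andP [eam emc]]]].
  apply: (no4 exa eac (esym' eyc) (esym' exy)) => //; by rewrite eq_sym.
case: (eqVneq m x) => [Emx | nmx]; first by subst; exact: (no3 exy eyc (esym' emc)).
case: (eqVneq m y) => [Emy | nmy]; first by subst; exact: (no3 exa eam (esym' exy)).
apply: (no5 exa eam emc (esym' eyc) (esym' exy)) => //; by rewrite eq_sym.
Qed.

Lemma within {x a b} : e x a -> e x b -> a != b -> sq_graph e a b.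
Proof.
move=> exa exb nab; rewrite /sq_graph nab /=; apply/orP; right.
by apply/existsP; exists x; rewrite (esym' exa) exb.
Qed.

Lemma sq_edge {x y} : e x y -> sq_graph e x y.
Proof. by move=> exy; rewrite /sq_graph (eneq exy) exy. Qed.

Lemma sq_two {x y z} : e x y -> e y z -> z != x -> sq_graph e x z.
Proof.
move=> exy eyz nzx; rewrite /sq_graph eq_sym nzx /=; apply/orP; right.
by apply/existsP; exists y; rewrite exy eyz.
Qed.

End OneGraph.

Arguments esym' {V e} Hs {x y}.
Arguments eneq {V e} Hs {x y}.
Arguments no3 {V e} Hs Hg {a b c}.
Arguments no4 {V e} Hs Hg {a b c d}.
Arguments no5 {V e} Hs Hg {a b c d f}.
Arguments F1 {V e} Hs Hg {x y z}.
Arguments cross {V e} Hs Hg {x y a c}.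
Arguments within {V e} Hs {x a b}.
Arguments sq_edge {V e} Hs {x y}.
Arguments sq_two {V e x y z}.

Section Two.
Variables (V : finType) (ea eb : rel V).
Hypotheses (Ha : simple_graph ea) (Hb : simple_graph eb)
  (ga : girth_at_least ea 6) (gb : girth_at_least eb 6)
  (Hsq : sq_graph ea =2 sq_graph eb).

Lemma claim_dir x y s t : ea x y -> eb x y -> ea x s -> s != y -> eb x s ->
  ea y t -> eb y t.
Proof.
move=> axy bxy axs nsy bxs ayt.
case: (eqVneq t x) => [-> | ntx]; first by apply: (esym' Hb bxy).
have s1 : sq_graph eb x t by rewrite -Hsq; exact: (sq_two axy ayt ntx).
have s2 : sq_graph eb y t by rewrite -Hsq; exact: (sq_edge Ha ayt).
case: (F1 Hb gb bxy s1 s2) => // bxt.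
case: (eqVneq s t) => [Est | nst].
  subst; exfalso; exact: (no3 Ha ga axy ayt (esym' Ha axs)).
have := within Hb bxs bxt nst; rewrite -Hsq.
by rewrite (negbTE (cross Ha ga axy axs nsy ayt ntx)).
Qed.

Lemma prop_dir x y t : (forall t, ea x t = eb x t) -> ea x y -> ea y t -> eb y t.
Proof.
move=> P axy ayt.
have bxy : eb x y by rewrite -P.
case: (eqVneq t x) => [-> | ntx]; first by apply: (esym' Hb bxy).
have s1 : sq_graph eb x t by rewrite -Hsq; exact: (sq_two axy ayt ntx).
have s2 : sq_graph eb y t by rewrite -Hsq; exact: (sq_edge Ha ayt).
case: (F1 Hb gb bxy s1 s2) => // bxt.
rewrite -P in bxt; exfalso; exact: (no3 Ha ga axy ayt (esym' Ha bxt)).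
Qed.

End Two.
Arguments claim_dir {V ea eb} Ha Hb ga gb Hsq {x y s t}.
Arguments prop_dir {V ea eb} Ha Hb ga gb Hsq {x y t}.

Section Three.
Variables (V : finType) (ea eb : rel V).
Hypotheses (Ha : simple_graph ea) (Hb : simple_graph eb)
  (ga : girth_at_least ea 6) (gb : girth_at_least eb 6)
  (Hsq : sq_graph ea =2 sq_graph eb).

Let Hsq' : sq_graph eb =2 sq_graph ea := fun x y => esym (Hsq x y).

Lemma claim {x y s} : ea x y -> eb x y -> ea x s -> s != y -> eb x s ->
  forall t, ea y t = eb y t.
Proof.
move=> axy bxy axs nsy bxs t; apply/idP/idP.
  exact: (claim_dir Ha Hb ga gb Hsq axy bxy axs nsy bxs).
exact: (claim_dir Hb Ha gb ga Hsq' bxy axy bxs nsy axs).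
Qed.

Lemma prop {x y} : (forall t, ea x t = eb x t) -> ea x y -> forall t, ea y t = eb y t.
Proof.
move=> P axy t; apply/idP/idP.
  exact: (prop_dir Ha Hb ga gb Hsq P axy).
have P' : forall t, eb x t = ea x t by move=> t'; rewrite P.
have bxy : eb x y by rewrite -P.
exact: (prop_dir Hb Ha gb ga Hsq' P' bxy).
Qed.

Lemma all_eq : connected_graph ea -> (exists v, forall t, ea v t = eb v t) ->
  forall u w, ea u w = eb u w.
Proof.
move=> Hc [v Pv] u.
have : connect ea v u by apply: Hc.
case/connectP => p pth ->.
elim: p v Pv pth => [|z p IH] v Pv /=; first done.
case/andP => avz pth; apply: IH pth.
exact: (prop Pv avz).
Qed.

Hypothesis ND : forall v, ~ (forall t, ea v t = eb v t).

Lemma swapL {x y z} : ea x y -> eb x y -> ea y z -> z != x -> eb x z.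
Proof.
move=> axy bxy ayz nzx.
have s1 : sq_graph eb x z by rewrite -Hsq; exact: (sq_two axy ayz nzx).
have s2 : sq_graph eb y z by rewrite -Hsq; exact: (sq_edge Ha ayz).
case: (F1 Hb gb bxy s1 s2) => // byz.
exfalso; apply: (ND x).
exact: (claim (esym' Ha axy) (esym' Hb bxy) ayz nzx byz).
Qed.

Lemma swapR {x y z} : ea x y -> eb x y -> eb x z -> z != y -> ea y z.
Proof.
move=> axy bxy bxz nzy.
have s1 : sq_graph ea x z by rewrite Hsq; exact: (sq_edge Hb bxz).
have s2 : sq_graph ea y z by rewrite Hsq; exact: (sq_two (esym' Hb bxy) bxz nzy).
case: (F1 Ha ga axy s1 s2) => // axz.
exfalso; apply: (ND y).
exact: (claim axy bxy axz nzy bxz).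
Qed.

Lemma matching {x y z} : ea x y -> eb x y -> ea x z -> eb x z -> y = z.
Proof.
move=> axy bxy axz bxz.
case: (eqVneq z y) => [-> // | nzy].
have ayz := swapR axy bxy bxz nzy.
exfalso; exact: (no3 Ha ga axy ayz (esym' Ha axz)).
Qed.

Variable f : V -> V.
Hypothesis Hf1 : forall u w, ea u w -> eb u w -> f u = w.
Hypothesis Hf2 : forall u, (forall w, ~~ (ea u w && eb u w)) -> f u = u.

Lemma matched_case {u u' v} : ea u u' -> eb u u' -> ea u v -> eb (f u) (f v).
Proof.
move=> au bu auv.
rewrite (Hf1 _ _ au bu).
case: (eqVneq v u') => [-> | nvu].
  rewrite (Hf1 _ _ (esym' Ha au) (esym' Hb bu)); exact: (esym' Hb bu).
have bu'v : eb u' v := swapL (esym' Ha au) (esym' Hb bu) auv nvu.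
suff -> : f v = v by [].
apply: Hf2 => w; apply/negP => /andP [avw bvw].
have bvu' := esym' Hb bu'v.
case: (eqVneq u' w) => [Eu'w | nu'w].
  subst w.
  have := matching (esym' Ha au) (esym' Hb bu) (esym' Ha avw) bu'v.
  move=> Euv; rewrite Euv in auv; by have := eneq Ha auv; rewrite eqxx.
have awu' := swapR avw bvw bvu' nu'w.
apply: (no4 Ha ga auv avw awu' (esym' Ha au)); last exact: nvu.
apply/eqP => Euw; subst w.
have := matching au bu auv (esym' Hb bvw).
by move=> E; rewrite E eqxx in nvu.
Qed.

Lemma main {u v} : ea u v -> eb (f u) (f v).
Proof.
move=> auv.
case: (pickP (fun w => ea u w && eb u w)) => [u' /andP [a b] | nu].
  exact: (matched_case a b auv).
case: (pickP (fun w => ea v w && eb v w)) => [v' /andP [a b] | nv].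
  apply: (esym' Hb); exact: (matched_case a b (esym' Ha auv)).
exfalso.
have := sq_edge Ha auv; rewrite Hsq.
case/andP => nuv /orP [buv | /existsP [m /andP [bum bmv]]].
  by have := nu v; rewrite /= auv buv.
have s1 : sq_graph ea u m by rewrite Hsq; exact: (sq_edge Hb bum).
have s2 : sq_graph ea v m by rewrite Hsq; exact: (sq_edge Hb (esym' Hb bmv)).
case: (F1 Ha ga auv s1 s2) => [aum | avm].
  by have := nu m; rewrite /= aum bum.
by have := nv m; rewrite /= avm (esym' Hb bmv).
Qed.

End Three.
Arguments all_eq {V ea eb} Ha Hb ga gb Hsq.
Arguments matching {V ea eb} Ha Hb ga gb Hsq ND {x y z}.
Arguments main {V ea eb} Ha Hb ga gb Hsq ND {f} Hf1 Hf2 {u v}.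

Theorem theorem1 (V : finType) (e1 e2 : rel V) :
  simple_graph e1 -> simple_graph e2 ->
  connected_graph e1 -> connected_graph e2 ->
  girth_at_least e1 6 -> girth_at_least e2 6 ->
  sq_graph e1 =2 sq_graph e2 ->
  graph_iso e1 e2.
Proof.
move=> H1 H2 C1 C2 g1 g2 Hsq.
case: (boolP [forall x, [forall y, e1 x y == e2 x y]]) => [/forallP H | Hn].
  exists id; split; first by exists id.
  by move=> x y; apply/eqP; exact: ((forallP (H x)) y).
have ND : forall v, ~ (forall t, e1 v t = e2 v t).
  move=> v Pv; apply: (negP Hn); apply/forallP => x; apply/forallP => y; apply/eqP.
  exact: (all_eq H1 H2 g1 g2 Hsq C1 (ex_intro _ v Pv)).
have Hsq' : sq_graph e2 =2 sq_graph e1 := fun x y => esym (Hsq x y).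
have ND' : forall v, ~ (forall t, e2 v t = e1 v t).
  by move=> v Pv; apply: (ND v) => t; rewrite Pv.
pose f u := if [pick w | e1 u w && e2 u w] is Some w then w else u.
have Hf1 : forall u w, e1 u w -> e2 u w -> f u = w.
  move=> u w a b; rewrite /f; case: pickP => [w' /andP [a' b'] | no].
    exact: (matching H1 H2 g1 g2 Hsq ND a' b' a b).
  by have := no w; rewrite /= a b.
have Hf2 : forall u, (forall w, ~~ (e1 u w && e2 u w)) -> f u = u.
  move=> u no; rewrite /f; case: pickP => [w' c | //].
  by have := no w'; rewrite c.
have Hf1' : forall u w, e2 u w -> e1 u w -> f u = w.
  by move=> u w a b; exact: (Hf1 u w b a).
have Hf2' : forall u, (forall w, ~~ (e2 u w && e1 u w)) -> f u = u.
  by move=> u no; apply: Hf2 => w; rewrite andbC.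
have inv : cancel f f.
  move=> u; case: (pickP (fun w => e1 u w && e2 u w)) => [w /andP [a b] | no].
    rewrite (Hf1 _ _ a b); exact: (Hf1 _ _ (esym' H1 a) (esym' H2 b)).
  have no' : forall w, ~~ (e1 u w && e2 u w) by move=> w; rewrite no.
  by rewrite (Hf2 _ no') (Hf2 _ no').
exists f; split; first by exists f.
move=> x y; apply/idP/idP.
  exact: (main H1 H2 g1 g2 Hsq ND Hf1 Hf2).
move=> b; have := main H2 H1 g2 g1 Hsq' ND' Hf1' Hf2' b.
by rewrite !inv.
Qed.
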